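(* Let $G$ be a simple graph on six vertices with degree sequence $d_1\leq d_2\leq\cdots\leq d_6$, where $d_1=d_2=2$ and $d_3\geq 3$. Then $G$ is Hamiltonian unless one of the following holds: (a) the two vertices of degree $2$ are nonadjacent and have the same pair of neighbors; or (b) $G$ is isomorphic to the graph $J$ obtained from a triangle and a complete graph $K_4$ by identifying one vertex of the triangle with one vertex of the $K_4$.
   Context: The degree sequence of a graph on $n$ vertices is the nondecreasing sequence $d_1\leq\cdots\leq d_n$ of its vertex degrees. A graph is Hamiltonian if it has a cycle through all of its vertices. *)

(* Defs.v *)
From mathcomp Require Import all_boot all_order.
Set Implicit Arguments. Unset Strict Implicit. Unset Printing Implicit Defensive.

Definition simple_graph (T : finType) (e : rel T) : Prop :=
  irreflexive e /\ symmetric e.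

Definition nbhd (T : finType) (e : rel T) (x : T) : {set T} := [set y | e x y].
Definition deg (T : finType) (e : rel T) (x : T) : nat := #|nbhd e x|.

Definition degree_seq (T : finType) (e : rel T) : seq nat :=
  sort leq [seq deg e x | x <- enum T].

Definition hamiltonian (T : finType) (e : rel T) : Prop :=
  exists s : seq T, [/\ uniq s, (forall x : T, x \in s) & cycle e s].

(* Graph J on 'I_6: triangle {0,1,2} and K4 on {2,3,4,5} sharing vertex 2. *)
Definition J_edge : rel 'I_6 :=
  fun i j => (i != j) && (((i <= 2) && (j <= 2)) || ((2 <= i) && (2 <= j)))%N.

Definition graph_iso (T T' : finType) (e : rel T) (e' : rel T') : Prop :=
  exists f : T -> T', bijective f /\ forall x y, e' (f x) (f y) = e x y.

(* Main.v *)
Require Import Defs.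
From mathcomp Require Import all_boot all_order.
From Stdlib Require Import FunctionalExtensionality.

Definition o (k : nat) (h : k < 6) : 'I_6 := Ordinal h.
Definition ords : seq 'I_6 :=
  [:: @o 0 isT; @o 1 isT; @o 2 isT; @o 3 isT; @o 4 isT; @o 5 isT].

Lemma mem_ords (x : 'I_6) : x \in ords.
Proof. by case: x => [[|[|[|[|[|[|k]]]]]] H]. Qed.

Lemma uniq_ords : uniq ords. Proof. by []. Qed.

Lemma perm_ords : perm_eq (enum 'I_6) ords.
Proof.
apply: uniq_perm; first exact: enum_uniq; first exact: uniq_ords.
by move=> x; rewrite mem_enum mem_ords.
Qed.

Definition pairsO : seq ('I_6 * 'I_6) :=
  [seq p <- [seq (i, j) | i <- ords, j <- ords] | (val p.1 < val p.2)%N].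

Definition pairsN : seq (nat * nat) := Eval vm_compute in [seq (val p.1, val p.2) | p <- pairsO].
Lemma pairsNE : pairsN = [seq (val p.1, val p.2) | p <- pairsO]. Proof. by vm_compute. Qed.
Definition pidx (i j : 'I_6) : nat := index (minn i j, maxn i j) pairsN.

Definition G (bs : seq bool) : rel 'I_6 :=
  fun i j => (i != j) && nth false bs (pidx i j).

Definition mask6 (E : rel 'I_6) : seq bool := [seq E p.1 p.2 | p <- pairsO].

Lemma pidx_ok : all (fun i => all (fun j => (i == j) ||
   ((pidx i j < 15) && (nth (i,i) pairsO (pidx i j) == if (i < j)%N then (i,j) else (j,i)))) ords) ords.
Proof. by vm_compute. Qed.

Lemma G_mask (E : rel 'I_6) : simple_graph E -> G (mask6 E) =2 E.
Proof.
case=> irr sym i j; rewrite /G.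
have := pidx_ok; move/allP/(_ i (mem_ords i))/allP/(_ j (mem_ords j)).
case: eqP => [->|/eqP ne] /=; first by rewrite irr.
case/andP=> lt /eqP h; rewrite (nth_map (i,i)) ?size_map //.
by rewrite h; case: ltnP => _ //=; rewrite sym.
Qed.

Fixpoint bits (n : nat) : seq (seq bool) :=
  if n is n'.+1 then [seq b :: l | b <- [:: true; false], l <- bits n'] else [:: [::]].

Lemma mem_bits (l : seq bool) : l \in bits (size l).
Proof.
elim: l => [|b l IH] //=.
by rewrite !mem_cat; case: b; rewrite (map_f _ IH) ?orbT.
Qed.

Definition perms : seq (seq 'I_6) := Eval vm_compute in permutations ords.

Fixpoint lhas {T : Type} (a : pred T) (s : seq T) : bool :=
  if s is x :: s' then (if a x then true else lhas a s') else false.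
Fixpoint lall {T : Type} (a : pred T) (s : seq T) : bool :=
  if s is x :: s' then (if a x then lall a s' else false) else true.
Lemma lhasE T (a : pred T) s : lhas a s = has a s.
Proof. by elim: s => //= x s ->; case: (a x). Qed.
Lemma lallE T (a : pred T) s : lall a s = all a s.
Proof. by elim: s => //= x s ->; case: (a x). Qed.

Definition degc (E : rel 'I_6) i := count (E i) ords.
Definition dseq (E : rel 'I_6) := sort leq (map (degc E) ords).
Definition condA (E : rel 'I_6) :=
  lhas (fun u => lhas (fun v => [&& u != v, degc E u == 2, degc E v == 2, ~~ E u v
      & lall (fun y => E u y == E v y) ords]) ords) ords.
Definition isoJ (E : rel 'I_6) :=
  lhas (fun p => lall (fun x : 'I_6 => lall (fun y : 'I_6 =>
     J_edge (nth ord0 p x) (nth ord0 p y) == E x y) ords) ords) perms.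
Definition hamb (E : rel 'I_6) := lhas (cycle E) perms.
Definition good (E : rel 'I_6) :=
  if nth 0 (dseq E) 0 != 2 then true else if nth 0 (dseq E) 1 != 2 then true
  else if (nth 0 (dseq E) 2 < 3)%N then true else if hamb E then true
  else if condA E then true else isoJ E.




Lemma all_good : lall (fun bs => good (G bs)) (bits 15).
Proof. vm_compute. reflexivity. Qed.

Lemma degcE (E : rel 'I_6) x : deg E x = degc E x.
Proof.
rewrite /deg /nbhd /degc cardsE cardE /enum_mem size_filter.
apply/permP: (E x); rewrite -enumT; exact: perm_ords.
Qed.

Lemma dseqE (E : rel 'I_6) : degree_seq E = dseq E.
Proof.
rewrite /degree_seq /dseq; apply/perm_sortP.
- by move=> a b; apply: leq_total.
- by move=> a b c; apply: leq_trans.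
- by move=> a b; apply: anti_leq.
rewrite (eq_map (degcE E)); apply: perm_map; exact: perm_ords.
Qed.

Lemma condA_sound (E : rel 'I_6) : condA E ->
  exists u v : 'I_6, [/\ u != v, deg E u = 2, deg E v = 2, ~~ E u v
                       & nbhd E u = nbhd E v].
Proof.
rewrite /condA lhasE => /hasP [u _]; rewrite lhasE => /hasP [v _].
case/and5P=> uv du dv euv; rewrite lallE => /allP h.
exists u, v; split=> //; rewrite ?degcE; try exact/eqP.
apply/setP=> y; rewrite !inE; exact/eqP/h/mem_ords.
Qed.

Lemma perm_ords_of p : p \in perms -> perm_eq p ords.
Proof.
have -> : perms = permutations ords by vm_compute.
by rewrite mem_permutations.
Qed.

Lemma isoJ_sound (E : rel 'I_6) : isoJ E -> graph_iso E J_edge.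
Proof.
rewrite /isoJ lhasE => /hasP [p /perm_ords_of pp]; rewrite lallE => /allP h.
exists (fun x : 'I_6 => nth ord0 p x); split.
  apply: injF_bij => x y /eqP; rewrite nth_uniq ?(perm_uniq pp) ?(perm_size pp) //.
  by move/eqP/val_inj.
move=> x y; have := h x (mem_ords x); rewrite lallE => /allP/(_ y (mem_ords y)).
by move/eqP.
Qed.

Lemma hamb_sound (E : rel 'I_6) : hamb E -> hamiltonian E.
Proof.
rewrite /hamb lhasE => /hasP [p /perm_ords_of pp cyc].
exists p; split=> //; first by rewrite (perm_uniq pp).
by move=> x; rewrite (perm_mem pp) mem_ords.
Qed.

Lemma main6 (E : rel 'I_6) :
  simple_graph E ->
  nth 0 (degree_seq E) 0 = 2 -> nth 0 (degree_seq E) 1 = 2 ->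
  3 <= nth 0 (degree_seq E) 2 ->
  ~ (exists u v : 'I_6, [/\ u != v, deg E u = 2, deg E v = 2, ~~ E u v
                       & nbhd E u = nbhd E v]) ->
  ~ graph_iso E J_edge ->
  hamiltonian E.
Proof.
move=> sE; rewrite dseqE => d0 d1 d2 nA nJ.
have eqE : E = G (mask6 E).
  apply: functional_extensionality => i; apply: functional_extensionality => j.
  by rewrite G_mask.
have sz : size (mask6 E) = 15 by rewrite size_map.
have mb := mem_bits (mask6 E); rewrite sz in mb.
have := all_good; rewrite lallE => /allP/(_ _ mb).
rewrite -eqE /good d0 d1 ltnNge d2 /=.
case: ifP => [/hamb_sound //|_].
case: ifP => [/condA_sound //|_].
by move/isoJ_sound.
Qed.

Theorem lemma4p3 (T : finType) (e : rel T) :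
  simple_graph e -> #|T| = 6 ->
  nth 0 (degree_seq e) 0 = 2 -> nth 0 (degree_seq e) 1 = 2 ->
  3 <= nth 0 (degree_seq e) 2 ->
  ~ (exists u v : T, [/\ u != v, deg e u = 2, deg e v = 2, ~~ e u v
                       & nbhd e u = nbhd e v]) ->
  ~ graph_iso e J_edge ->
  hamiltonian e.
Proof.
move=> [irr sym] HT d0 d1 d2 nA nJ.
pose f (i : 'I_6) : T := enum_val (cast_ord (esym HT) i).
pose g (x : T) : 'I_6 := cast_ord HT (enum_rank x).
have fK : cancel f g by move=> i; rewrite /f /g enum_valK cast_ordKV.
have gK : cancel g f by move=> x; rewrite /f /g cast_ordK enum_rankK.
have finj : injective f := can_inj fK.
pose E (i j : 'I_6) := e (f i) (f j).
have nbE : forall i, nbhd e (f i) = f @: nbhd E i.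
  move=> i; apply/setP => y; rewrite -(gK y) (mem_imset _ _ finj) !inE.
  by [].
have degE : forall i, deg E i = deg e (f i).
  by move=> i; rewrite /deg nbE card_imset.
have dsE : degree_seq E = degree_seq e.
  rewrite /degree_seq; apply/perm_sortP.
  - by move=> a b; apply: leq_total.
  - by move=> a b c; apply: leq_trans.
  - by move=> a b; apply: anti_leq.
  rewrite (eq_map degE) (map_comp (deg e) f); apply: perm_map.
  apply: uniq_perm; first by rewrite (map_inj_uniq finj) enum_uniq.
    exact: enum_uniq.
  by move=> x; rewrite mem_enum -(gK x) map_f ?mem_enum.
have sE : simple_graph E by split; [move=> i; apply: irr | move=> i j; apply: sym].
have := @main6 E sE; rewrite dsE => /(_ d0 d1 d2) H.
case: H.
- case=> u [v [uv du dv euv nuv]]; apply: nA; exists (f u), (f v); split.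
  + by apply: contra uv => /eqP/finj ->.
  + by rewrite -degE.
  + by rewrite -degE.
  + exact: euv.
  + by rewrite !nbE nuv.
- case=> h [bh hh]; apply: nJ; exists (h \o g); split.
    by apply: bij_comp => //; exact: (Bijective gK fK).
  by move=> x y /=; rewrite hh /E !gK.
- move=> s [us alls cs]; exists (map f s); split.
  + by rewrite (map_inj_uniq finj).
  + by move=> x; rewrite -(gK x) map_f.
  + by rewrite cycle_map.
Qed.
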